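(* Let $a\ge 0$ be a real number and let $T$ be a tree on $n$ vertices with degrees $k_1,\dots,k_n$, and set $\langle k^2\rangle=\frac{1}{n}\sum_{i=1}^n k_i^2$ and $E_0[C]=\frac{n}{6}\left(n-1-\langle k^2\rangle\right)$. If $n>3a+3$ and $E_0[C]\le a$, then $T$ is a star tree, i.e. $T$ has a vertex of degree $n-1$.
   Context: $E_0[C]$ equals the expected number of crossings when the vertices of $T$ are placed at positions $1,\dots,n$ by a uniformly random permutation, where two edges $\{s,t\}$, $\{u,v\}$ cross iff exactly one of the positions of $s,t$ lies strictly between the positions of $u$ and $v$ and the other lies strictly outside that interval. *)

(* Defs.v *)
From mathcomp Require Import all_boot all_order all_algebra.
From mathcomp Require Import all_reals.
Set Implicit Arguments. Unset Strict Implicit. Unset Printing Implicit Defensive.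
Import Order.TTheory GRing.Theory Num.Theory.

Definition simple_graph (V : finType) (e : rel V) : Prop :=
  symmetric e /\ irreflexive e.

Definition connected_graph (V : finType) (e : rel V) : Prop :=
  forall x y : V, connect e x y.

Definition acyclic_graph (V : finType) (e : rel V) : Prop :=
  forall c : seq V, uniq c -> 2 < size c -> ~~ cycle e c.

Definition is_tree (V : finType) (e : rel V) : Prop :=
  [/\ simple_graph e, connected_graph e & acyclic_graph e].

Definition deg (V : finType) (e : rel V) (x : V) : nat := #|[set y | e x y]|.

Definition mean_sq_deg (R : realType) (V : finType) (e : rel V) : R :=
  (\sum_(x : V) ((deg e x) ^ 2)%:R) / (#|V|)%:R.

Definition E0C (R : realType) (V : finType) (e : rel V) : R :=
  (#|V|)%:R / 6%:R * ((#|V|)%:R - 1 - mean_sq_deg R e).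

(* Main.v *)
Require Import Defs.
From mathcomp Require Import all_boot all_order all_algebra.
From mathcomp Require Import all_reals.
From mathcomp Require Import zify ring lra.
Import Order.TTheory GRing.Theory Num.Theory.
Set Implicit Arguments. Unset Strict Implicit.
Lemma step_leaf (V : finType) (e : rel V) (S : {set V}) (y : V) (q : seq V) :
  symmetric e -> irreflexive e -> acyclic_graph e ->
  uniq (y :: q) -> {subset y :: q <= S} -> path e y q ->
  #|[set z in S | e y z]| <= 1 \/
  exists z, [/\ uniq (z :: y :: q), {subset z :: y :: q <= S} & path e z (y :: q)].
Proof.
move=> sym irr acyc Hu Hs Hp.
case: (leqP #|[set z in S | e y z]| 1) => [H1|H2]; first by left.
right.
set A := [set z in S | e y z] in H2.
have: 0 < #|A :\ head y q|.
  rewrite (cardsD1 (head y q) A) in H2; case: (head y q \in A) H2 => /=; lia.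
rewrite card_gt0 => /set0Pn [z]; rewrite !inE => /and3P [zw zS eyz].
exists z.
have zy : z != y by apply: contraTneq eyz => ->; rewrite irr.
case zq: (z \in q).
  exfalso. case: q Hu Hs Hp zq zw => [//|w q'] Hu Hs Hp zq zw /=.
  rewrite /= in zw; rewrite inE (negbTE zw) /= in zq.
  case/splitPr: zq Hu Hp => q1 q2 Hu Hp.
  have U : uniq (y :: w :: rcons q1 z).
    move: Hu; rewrite -cat_rcons -!cat_cons cat_uniq => /andP [Hu _].
    exact: Hu.
  have Sz : 2 < size (y :: w :: rcons q1 z) by rewrite /= size_rcons.
  move/negP: (acyc _ U Sz); apply.
  move: Hp; rewrite -cat_rcons -cat_cons cat_path => /andP [Hp _].
  by rewrite /cycle rcons_path Hp /= last_rcons sym.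
split.
- by rewrite cons_uniq in_cons negb_or zy zq Hu.
- by move=> u; rewrite inE => /predU1P [->|/Hs].
- by rewrite /= sym eyz Hp.
Qed.
Lemma leaf (V : finType) (e : rel V) (S : {set V}) (x0 : V) :
  symmetric e -> irreflexive e -> acyclic_graph e -> x0 \in S ->
  exists2 x, x \in S & #|[set z in S | e x z]| <= 1.
Proof.
move=> sym irr acyc x0S.
suff H : forall m y q, #|S| - size (y :: q) <= m ->
  uniq (y :: q) -> {subset y :: q <= S} -> path e y q ->
  exists2 x, x \in S & #|[set z in S | e x z]| <= 1.
  apply: (H #|S| x0 [::]) => //; first lia.
  by move=> u; rewrite inE => /eqP ->.
elim=> [|m IH] y q Hm Hu Hs Hp;
  case: (step_leaf sym irr acyc Hu Hs Hp) => [H|[z [Hu' Hs' Hp']]];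
  try by exists y => //; apply: Hs; rewrite inE eqxx.
- have := uniq_leq_size Hu' (s2 := enum S).
  have -> : size (enum S) = #|S| by rewrite cardE.
  move=> /(_ _) H; have : size (z :: y :: q) <= #|S|.
    by apply: H => u /Hs'; rewrite mem_enum.
  move: Hm => /=; lia.
- apply: (IH z (y :: q)) => //; move: Hm => /=; lia.
Qed.

Definition Ecnt (V : finType) (e : rel V) (S : {set V}) : nat :=
  \sum_(a in S) \sum_(b in S) (e a b : nat).

Lemma card_sum (V : finType) (S : {set V}) (P : pred V) :
  #|[set y in S | P y]| = \sum_(y in S) (P y : nat).
Proof.
rewrite -sum1_card big_mkcond /= [RHS]big_mkcond /=; apply: eq_bigr => y _.
by rewrite !inE; case: (y \in S); case: (P y).
Qed.

Lemma Ecnt_split (V : finType) (e : rel V) (S : {set V}) x :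
  symmetric e -> irreflexive e -> x \in S ->
  Ecnt e S = Ecnt e (S :\ x) + 2 * \sum_(b in S :\ x) (e x b : nat).
Proof.
move=> sym irr xS; rewrite /Ecnt (bigD1 x xS) /= (bigD1 x xS) /= irr add0n.
have E : forall F : V -> nat, \sum_(b in S | b != x) F b = \sum_(b in S :\ x) F b.
  by move=> F; apply: eq_bigl => b; rewrite !inE andbC.
rewrite E E.
rewrite [X in _ + X](eq_bigr (fun a => (e a x : nat) + \sum_(b in S :\ x) (e a b : nat))); last first.
  by move=> a _; rewrite (bigD1 x xS) /= E.
rewrite big_split /=.
have -> : \sum_(i in S :\ x) (e i x : nat) = \sum_(b in S :\ x) (e x b : nat).
  by apply: eq_bigr => i _; rewrite sym.
lia.
Qed.

Lemma Ecnt_bound (V : finType) (e : rel V) (S : {set V}) :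
  symmetric e -> irreflexive e -> acyclic_graph e ->
  Ecnt e S <= 2 * (#|S| - 1).
Proof.
move=> sym irr acyc.
move: {2}#|S| (leqnn #|S|) => k; elim: k S => [|k IH] S HS.
  move: HS; rewrite leqn0 cards_eq0 => /eqP ->; by rewrite /Ecnt big_set0.
case: (set_0Vmem S) => [->|[x0 x0S]]; first by rewrite /Ecnt big_set0.
have [x xS Hx] := leaf sym irr acyc x0S.
rewrite (Ecnt_split sym irr xS).
have HS' : #|S :\ x| <= k by move: HS; rewrite (cardsD1 x S) xS; lia.
have := IH _ HS'.
have Hd : \sum_(b in S :\ x) (e x b : nat) <= 1.
  apply: leq_trans Hx; rewrite card_sum (bigD1 x xS) /= irr add0n.
  by apply: eq_leq; apply: eq_bigl => b; rewrite !inE andbC.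
have Hd2 : \sum_(b in S :\ x) (e x b : nat) <= #|S :\ x|.
  rewrite -sum1_card; apply: leq_sum => b _; by case: (e x b).
have := cardsD1 x S; rewrite xS.
lia.
Qed.
Lemma arith (n D F S B : nat) : 4 <= n -> D <= n - 2 -> D + F <= 2*n-2 -> n - 1 <= F ->
  B + 1 <= D -> B + n - 1 <= F -> (B + 1 = D \/ B + n - 1 = F) ->
  S + (n-1)*(B+1) <= (B+2)*F -> D*D + S + 3*n <= n*n + 6.
Proof. move=> *. nia. Qed.

Lemma seq_bound (V : finType) (f : V -> nat) (x : V) : 4 <= #|V| ->
  (forall y, 1 <= f y) -> (forall y, f y <= f x) -> f x <= #|V| - 2 ->
  \sum_y f y <= 2 * #|V| - 2 ->
  \sum_y f y ^ 2 + 3 * #|V| <= #|V| * #|V| + 6.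
Proof.
move=> n4 f1 fmax fxn fsum.
set n := #|V| in n4 fxn fsum *.
rewrite (bigD1 x) in fsum; last by []. rewrite (bigD1 x); last by []. simpl.
set F := \sum_(y | y != x) f y in fsum *.
have cardx : #|[pred y | y != x]| = n - 1 by rewrite cardC1 subn1.
have FE : \sum_(y | y != x) (f y - 1) + (n - 1) = F.
  rewrite -cardx -sum1_card -big_split /=; apply: eq_bigr => y _.
  by have := f1 y; lia.
have Fy : forall y, y != x -> f y - 1 <= F - (n - 1).
  move=> y yx; have <- : \sum_(y | y != x) (f y - 1) = F - (n - 1) by lia.
  by rewrite (bigD1 y) //= leq_addr.
set B := minn (f x - 1) (F - (n - 1)).
have Hterm : forall y, y != x -> f y ^ 2 + (B + 1) <= (B + 2) * f y.
  move=> y yx; have := Fy y yx; have := fmax y; have := f1 y.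
  move=> h1 h2 h3; have h4 : f y <= B + 1 by rewrite /B; lia.
  rewrite expnS expn1; nia.
have Hsum : \sum_(y | y != x) f y ^ 2 + (n - 1) * (B + 1) <= (B + 2) * F.
  rewrite -cardx -sum1_card big_distrl /= -big_split /= /F big_distrr /=.
  by apply: leq_sum => y yx; rewrite mul1n; apply: Hterm.
have := f1 x => fx1.
have h1 : f x + F <= 2 * n - 2 by [].
have h2 : n - 1 <= F by lia.
have h3 : B + 1 <= f x by rewrite /B; lia.
have h4 : B + n - 1 <= F by rewrite /B; lia.
have h5 : B + 1 = f x \/ B + n - 1 = F by rewrite /B; lia.
have := arith n4 fxn h1 h2 h3 h4 h5 Hsum.
rewrite [f x ^ 2]expnS expn1; lia.
Qed.
Lemma deg_sum (V : finType) (e : rel V) x : deg e x = \sum_y (e x y : nat).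
Proof.
rewrite /deg -sum1_card big_mkcond /=; apply: eq_bigr => y _.
by rewrite inE; case: (e x y).
Qed.

Lemma graph_facts (V : finType) (e : rel V) : is_tree e -> 2 <= #|V| ->
  [/\ forall y, 1 <= deg e y, forall y, deg e y <= #|V| - 1 &
      \sum_y deg e y <= 2 * #|V| - 2].
Proof.
case=> [[sym irr] conn acyc] n2; split.
- move=> y; have : 0 < #|[set~ y]| by rewrite cardsC1; lia.
  rewrite card_gt0 => /set0Pn [z]; rewrite !inE => zy.
  case/connectP: (conn y z) => [[|w p]] /=; first by move=> _ E; rewrite E eqxx in zy.
  case/andP=> eyw _ _; rewrite /deg card_gt0; apply/set0Pn; exists w; by rewrite inE.
- move=> y; rewrite /deg subn1 -(cardsC1 y).
  apply: subset_leq_card; apply/subsetP => z; rewrite !inE.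
  by apply: contraTneq => ->; rewrite irr.
- have := Ecnt_bound setT sym irr acyc; rewrite cardsT.
  suff -> : Ecnt e setT = \sum_y deg e y by lia.
  rewrite /Ecnt; apply: eq_big => [a|a _]; first by rewrite inE.
  by rewrite deg_sum; apply: eq_bigl => b; rewrite inE.
Qed.

Local Open Scope ring_scope.
Unset Implicit Arguments.
Theorem mainTheorem2 (R : realType) (a : R) (V : finType) (e : rel V) :
  0 <= a ->
  is_tree e ->
  3 * a + 3 < (#|V|)%:R ->
  E0C R e <= a ->
  exists x : V, deg e x = (#|V|).-1.
Proof.
move=> a0 tree Hn HE.
have n4 : (4 <= #|V|)%N.
  have : (3%:R : R) < (#|V|)%:R by rewrite -[3%:R]/(3 : R); lra.
  by rewrite ltr_nat.
case: (pickP (fun x => deg e x == (#|V|).-1)) => [x /eqP H|H]; first by exists x.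
exfalso.
have [d1 dn dsum] := graph_facts tree (ltnW (ltnW n4)).
have [x0 _] : {x0 : V | true} by move: n4; case: (pickP (@predT V)) => [y _ _|/eq_card0 E]; [exists y | rewrite E].
have [x _ ymax] := @arg_maxnP V x0 predT (deg e) isT.
have Hx : (deg e x <= #|V| - 2)%N.
  have := H x => /= /negbT /eqP H1; have := dn x; rewrite -subn1 in H1; move=> H2; move: (deg e x) (#|V|) H1 H2 => k m; lia.
have Q := seq_bound n4 d1 (fun z => ymax z isT) Hx dsum.
move: HE; rewrite /E0C /mean_sq_deg -natr_sum.
move: Q; set q := (\sum_y _)%N => Q.
have : ((q + 3 * #|V|)%:R <= (#|V| * #|V| + 6)%:R :> R) by rewrite ler_nat.
rewrite !natrD !natrM.
set N := (#|V|)%:R; set Qr := q%:R.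
have N0 : N != 0 by rewrite pnatr_eq0; lia.
have -> : N / 6%:R * (N - 1 - Qr / N) = (N * N - N - Qr) / 6.
  by rewrite -[6%:R]/(6 : R); field.
move: Hn; rewrite -/N -[3%:R]/(3 : R) -[6%:R]/(6 : R).
move=> Hn Q1 HE.
lra.
Qed.
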